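(* Let $n\ge3$ and let $g=(g_{ab})$ be a smooth Riemannian metric (symmetric positive definite matrix function) on an open set $U\subset\mathbb R^n$. Let $L=g^{ab}\partial_{ab}$ and define the linear operator $\tilde\Gamma^k$ on symmetric matrix functions $h$ by $\tilde\Gamma^k(h)=-\frac{n-2}{2}\frac{g^{kr}g^{ka}g^{kb}}{g^{kk}}\partial_rh_{ab}$ (no summation over $k$). Let $Q$ be the principal part (fourth order part) of the linear operator $$h_{ab}\mapsto L^2(h_{ab})-L\big[\partial_a(g_{bl}\tilde\Gamma^l(h))+\partial_b(g_{al}\tilde\Gamma^l(h))\big]+\frac{n-2}{n-1}\partial_{abl}\tilde\Gamma^l(h)+\frac1{n-1}L(\partial_l\tilde\Gamma^l(h))\,g_{ab}$$ acting on symmetric $n\times n$ matrix functions $h$, where $L^2=g^{ab}g^{cd}\partial_{abcd}$. Then $Q$ is elliptic of order $4$, i.e. for every $x\in U$ and $\xi\ne0$ its principal symbol is an invertible linear map on symmetric matrices. *)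

(* Defs.v *)
From HB Require Import structures.
From mathcomp Require Import all_boot all_order all_algebra.
From mathcomp Require Import all_classical all_reals all_analysis.
Set Implicit Arguments. Unset Strict Implicit. Unset Printing Implicit Defensive.
Import Order.TTheory GRing.Theory Num.Theory.
Import numFieldNormedType.Exports.
Local Open Scope ring_scope.

Section Defs.
Variables (R : realType) (n : nat).

Definition symmx (A : 'M[R]_n) : Prop := A^T = A.

Definition posdefmx (A : 'M[R]_n) : Prop :=
  symmx A /\ forall v : 'rV[R]_n, v != 0 -> 0 < (v *m A *m v^T) 0 0.

(* Symbol of tilde-Gamma^k at covector xi (d_r replaced by xi_r), metric g,
   g^{ab} = entries of invmx g; no summation over k:
   -(n-2)/2 * g^{kr} g^{ka} g^{kb} / g^{kk} * xi_r h_{ab}. *)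
Definition Gtilde_symb (g : 'M[R]_n) (xi : 'rV[R]_n) (h : 'M[R]_n) (k : 'I_n) : R :=
  let G := invmx g in
  - ((n%:R - 2) / 2) *
    ((\sum_(r < n) \sum_(a < n) \sum_(b < n) G k r * G k a * G k b * xi 0 r * h a b)
     / G k k).

Definition L_symb (g : 'M[R]_n) (xi : 'rV[R]_n) : R :=
  \sum_(a < n) \sum_(b < n) invmx g a b * xi 0 a * xi 0 b.

(* principal (fourth order) symbol of the operator Q at (g(x), xi):
   L^2 h_ab - L[d_a(g_bl Gt^l(h)) + d_b(g_al Gt^l(h))]
   + (n-2)/(n-1) d_abl Gt^l(h) + 1/(n-1) L(d_l Gt^l(h)) g_ab,
   with every derivative replaced by xi (derivatives falling on g are of lower
   order and do not contribute). *)
Definition Q_symb (g : 'M[R]_n) (xi : 'rV[R]_n) (h : 'M[R]_n) : 'M[R]_n :=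
  \matrix_(a < n, b < n)
    (L_symb g xi ^+ 2 * h a b
     - L_symb g xi * (xi 0 a * \sum_(l < n) g b l * Gtilde_symb g xi h l
                      + xi 0 b * \sum_(l < n) g a l * Gtilde_symb g xi h l)
     + (n%:R - 2) / (n%:R - 1) * (xi 0 a * xi 0 b *
                                  \sum_(l < n) xi 0 l * Gtilde_symb g xi h l)
     + 1 / (n%:R - 1) * (L_symb g xi * \sum_(l < n) xi 0 l * Gtilde_symb g xi h l)
       * g a b).

Definition invertible_on_sym (f : 'M[R]_n -> 'M[R]_n) : Prop :=
  (forall h, symmx h -> symmx (f h)) /\
  (forall K, symmx K -> exists h, symmx h /\ f h = K /\
        forall h', symmx h' -> f h' = K -> h' = h).

End Defs.

(* Main.v *)
Require Import Defs.
From HB Require Import structures.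
From mathcomp Require Import all_boot all_order all_algebra.
From mathcomp Require Import all_classical all_reals all_analysis.
From mathcomp Require Import ring lra.
Import Order.TTheory GRing.Theory Num.Theory.
Import numFieldNormedType.Exports.
Local Open Scope ring_scope.

Section Pre.
Variables (R : realType) (n : nat).

Lemma quad_form (A : 'M[R]_n) (x : 'rV[R]_n) :
  \sum_a \sum_b A a b * x 0 a * x 0 b = (x *m A *m x^T) 0 0.
Proof.
rewrite !mxE exchange_big; apply: eq_bigr => b _.
rewrite !mxE mulr_suml; apply: eq_bigr => a _; rewrite ?mxE; ring.
Qed.

Lemma posdef_unit (g : 'M[R]_n) : posdefmx g -> g \in unitmx.
Proof.
move=> [_ pg]; rewrite unitmxE unitfE; apply/negP => /det0P [v vn0 vg0].
by have := pg v vn0; rewrite vg0 mul0mx mxE ltxx.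
Qed.

Lemma posdef_inv (g : 'M[R]_n) : posdefmx g -> posdefmx (invmx g).
Proof.
move=> pd; have gu := posdef_unit g pd; case: pd => sg pg.
have sG : symmx (invmx g) by rewrite /symmx trmx_inv sg.
split => // v vn0.
have wn0 : v *m invmx g != 0.
  apply: contra vn0 => /eqP w0; apply/eqP.
  by rewrite -[v]mulmx1 -(mulVmx gu) mulmxA w0 mul0mx.
have := pg _ wn0; rewrite trmx_mul sG.
by rewrite -!mulmxA (mulmxA g) (mulmxV gu) mul1mx.
Qed.

Lemma posdef_diag (g : 'M[R]_n) k : posdefmx g -> 0 < g k k.
Proof.
move=> [_ pg]; have en0 : (delta_mx 0 k : 'rV[R]_n) != 0.
  apply/eqP => /matrixP /(_ 0 k); rewrite !mxE !eqxx /= => /eqP; by rewrite oner_eq0.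
have := pg _ en0; rewrite trmx_delta -rowE -colE !mxE. done.
Qed.
Lemma dsum_fac (x y f1 f2 : 'I_n -> R) :
  \sum_a \sum_b x a * y b * (f1 a * f2 b) = (\sum_a x a * f1 a) * (\sum_b y b * f2 b).
Proof.
rewrite mulr_suml; apply: eq_bigr => a _; rewrite mulr_sumr; apply: eq_bigr => b _; ring.
Qed.

Lemma dsum4 (c1 c2 c3 c4 : R) (F1 F2 F3 F4 : 'I_n -> 'I_n -> R) :
  \sum_a \sum_b (c1 * F1 a b + c2 * F2 a b + c3 * F3 a b + c4 * F4 a b) =
  c1 * (\sum_a \sum_b F1 a b) + c2 * (\sum_a \sum_b F2 a b)
  + c3 * (\sum_a \sum_b F3 a b) + c4 * (\sum_a \sum_b F4 a b).
Proof.
rewrite !mulr_sumr -!big_split; apply: eq_bigr => a _ /=.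
by rewrite !mulr_sumr -!big_split.
Qed.

Lemma sum_delta (k : 'I_n) (f : 'I_n -> R) :
  \sum_l (1%:M : 'M[R]_n) k l * f l = f k.
Proof.
rewrite (bigD1 k) //= big1 ?addr0; first by rewrite mxE eqxx mul1r.
by move=> i ik; rewrite mxE eq_sym (negbTE ik) mul0r.
Qed.
End Pre.
Arguments quad_form {R n}.
Arguments posdef_unit {R n}.
Arguments posdef_inv {R n}.
Arguments posdef_diag {R n}.
Arguments dsum_fac {R n}.
Arguments dsum4 {R n}.
Arguments sum_delta {R n}.

Section Lin.
Variables (R : realType) (n : nat) (g : 'M[R]_n) (xi : 'rV[R]_n).

Lemma Gt_lin (c : R) (u v : 'M[R]_n) k :
  Gtilde_symb g xi (c *: u + v) k = c * Gtilde_symb g xi u k + Gtilde_symb g xi v k.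
Proof.
rewrite /Gtilde_symb.
set G := invmx g.
have E r a b : G k r * G k a * G k b * xi 0 r * (c *: u + v) a b =
   c * (G k r * G k a * G k b * xi 0 r * u a b) + G k r * G k a * G k b * xi 0 r * v a b.
  by rewrite !mxE; ring.
under eq_bigr do under eq_bigr do under eq_bigr do rewrite E.
under eq_bigr do under eq_bigr do rewrite big_split -mulr_sumr /=.
under eq_bigr do rewrite big_split -mulr_sumr /=.
rewrite big_split -mulr_sumr /=.
ring.
Qed.

Lemma sum_lin (c : R) (f x y : 'I_n -> R) :
  \sum_l f l * (c * x l + y l) = c * \sum_l f l * x l + \sum_l f l * y l.
Proof. rewrite mulr_sumr -big_split; apply: eq_bigr => i _ /=; ring. Qed.

Lemma sum_lin2 (c : R) (f : 'I_n -> R) u v :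
  \sum_l f l * Gtilde_symb g xi (c *: u + v) l =
  c * \sum_l f l * Gtilde_symb g xi u l + \sum_l f l * Gtilde_symb g xi v l.
Proof. rewrite -sum_lin; apply: eq_bigr => i _; by rewrite Gt_lin. Qed.

Lemma Q_lin : linear (Q_symb g xi).
Proof.
move=> c u v; apply/matrixP=> a b; rewrite !mxE.
rewrite !sum_lin2; ring.
Qed.

HB.instance Definition _ := GRing.isLinear.Build R 'M[R]_n 'M[R]_n *:%R (Q_symb g xi) Q_lin.

Lemma Gt_tr h k : Gtilde_symb g xi h^T k = Gtilde_symb g xi h k.
Proof.
rewrite /Gtilde_symb; congr (_ * (_ / _)); apply: eq_bigr => r _.
rewrite exchange_big; apply: eq_bigr => a _; apply: eq_bigr => b _; rewrite !mxE; ring.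
Qed.

Lemma sum_tr (f : 'I_n -> R) h :
  \sum_l f l * Gtilde_symb g xi h^T l = \sum_l f l * Gtilde_symb g xi h l.
Proof. by apply: eq_bigr => i _; rewrite Gt_tr. Qed.

Lemma Q_tr h : symmx g -> Q_symb g xi h^T = (Q_symb g xi h)^T.
Proof.
move=> sg; apply/matrixP => a b; rewrite !mxE.
have gs i j : g i j = g j i by rewrite -[in LHS]sg mxE.
rewrite !sum_tr (gs a b); ring.
Qed.
End Lin.

Section Key.
Variables (R : realType) (n : nat).

Lemma key (g : 'M[R]_n) (xi : 'rV[R]_n) (h : 'M[R]_n) :
  (3 <= n)%N -> posdefmx g -> xi != 0 -> Q_symb g xi h = 0 -> h = 0.
Proof.
move=> hn pd xn0 Qh0.
have gu := posdef_unit g pd.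
have [sG pG] := posdef_inv g pd.
have sg : symmx g by case: pd.
have Npos : 0 < L_symb g xi by rewrite /L_symb quad_form; apply: pG.
have n3 : (3 : R) <= n%:R by rewrite (ler_nat R 3 n).
have dpos k : 0 < invmx g k k by apply: posdef_diag; apply: posdef_inv.
have GgE : invmx g *m g = 1%:M by rewrite mulVmx.
set G := invmx g in sG pG dpos GgE Npos *.
set N := L_symb g xi in Npos *.
set nn : R := n%:R in n3 *.
pose gam l := Gtilde_symb g xi h l.
pose s := \sum_l xi 0 l * gam l.
pose v b := \sum_l g b l * gam l.
have N0 : N != 0 by rewrite gt_eqF.
have nn1 : nn - 1 != 0 by apply/eqP => e; move: n3 e; clear; rewrite /nn; lra.
have Eh a b : h a b = (N * (xi 0 a * v b + xi 0 b * v a)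
     - (nn - 2) / (nn - 1) * (xi 0 a * xi 0 b * s) - 1 / (nn - 1) * (N * s) * g a b) / N ^+ 2.
  have e := congr1 (fun M : 'M[R]_n => M a b) Qh0; rewrite /= !mxE in e.
  apply: (mulIf (expf_neq0 2 N0)); rewrite divfK ?expf_neq0 //.
  apply/eqP; rewrite -subr_eq0; apply/eqP; rewrite -[RHS]e /v /s /gam /N /nn; ring.
pose eta k := \sum_r G k r * xi 0 r.
have wE k : \sum_b G k b * v b = gam k.
  rewrite -(sum_delta k gam) -GgE /v.
  under eq_bigr do rewrite mulr_sumr.
  rewrite exchange_big /=; apply: eq_bigr => l _; rewrite mxE mulr_suml.
  by apply: eq_bigr => b _; ring.
have dE k : \sum_a \sum_b G k a * G k b * g a b = G k k.
  have : (G *m g *m G^T) k k = G k k by rewrite GgE mul1mx mxE.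
  move <-; rewrite mxE exchange_big /=; apply: eq_bigr => b _.
  rewrite !mxE mulr_suml; apply: eq_bigr => a _; ring.
have etaE : \sum_l xi 0 l * eta l = N.
  rewrite /N /L_symb -/G; apply: eq_bigr => a _; rewrite /eta mulr_sumr.
  by apply: eq_bigr => b _; ring.
have PE k : \sum_a \sum_b G k a * G k b * h a b =
    (N * (2 * eta k * gam k) - (nn - 2) / (nn - 1) * s * eta k ^+ 2
     - 1 / (nn - 1) * (N * s) * G k k) / N ^+ 2.
  have T a b : G k a * G k b * h a b =
     (N / N ^+ 2) * (G k a * G k b * (xi 0 a * v b))
     + (N / N ^+ 2) * (G k a * G k b * (v a * xi 0 b))
     + (- ((nn - 2) / (nn - 1) * s) / N ^+ 2) * (G k a * G k b * (xi 0 a * xi 0 b))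
     + (- (1 / (nn - 1) * (N * s)) / N ^+ 2) * (G k a * G k b * g a b).
    rewrite Eh; ring.
  under eq_bigr do under eq_bigr do rewrite T.
  rewrite dsum4 !dsum_fac dE wE -/(eta k); field.
  by rewrite N0 /=; exact: nn1.
have gamE k : gam k = - ((nn - 2) / 2) *
    ((eta k * \sum_a \sum_b G k a * G k b * h a b) / G k k).
  rewrite /gam /Gtilde_symb -/G; congr (_ * (_ / _)).
  rewrite /eta mulr_suml; apply: eq_bigr => r _; rewrite mulr_sumr.
  apply: eq_bigr => a _; rewrite mulr_sumr; apply: eq_bigr => b _; ring.
have keyk k : N * gam k = (nn - 2) / (2 * (nn - 1)) * s * eta k.
  have e := gamE k; rewrite PE in e.
  have d0 : G k k != 0 by rewrite gt_eqF.
  have p : 0 < N * G k k + (nn - 2) * eta k ^+ 2.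
    apply: ltr_pwDl; first by rewrite mulr_gt0.
    by rewrite mulr_ge0 ?sqr_ge0 // subr_ge0; move: n3; clear; rewrite /nn; lra.
  have p0 : N * G k k + (nn - 2) * eta k ^+ 2 != 0 by rewrite gt_eqF.
  apply: (mulfI p0).
  have e2 : gam k * G k k * N ^+ 2 = - ((nn - 2) / 2) * (eta k *
      (N * (2 * eta k * gam k) - (nn - 2) / (nn - 1) * s * eta k ^+ 2
       - 1 / (nn - 1) * (N * s) * G k k)).
    by rewrite {1}e; field; rewrite d0 N0 !andbT; exact: nn1.
  have -> : (N * G k k + (nn - 2) * eta k ^+ 2) * (N * gam k) =
    gam k * G k k * N ^+ 2 + (nn - 2) * N * eta k ^+ 2 * gam k by ring.
  rewrite e2; field; exact: nn1.
have s0 : s = 0.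
  have e1 : N * s = (nn - 2) / (2 * (nn - 1)) * s * N.
    rewrite -[in RHS]etaE mulr_sumr /s mulr_sumr; apply: eq_bigr => l _.
    by rewrite mulrCA keyk -/s; ring.
  have : s * (N * nn) = 0.
    have -> : s * (N * nn) = 2 * (nn - 1) * (N * s) - (nn - 2) * s * N by ring.
    rewrite e1; field; exact: nn1.
  move/eqP; rewrite !mulf_eq0 (negbTE N0) /= => /orP [/eqP // | nn0].
  by move: n3 nn0; clear; rewrite /nn => n3 /eqP e; lra.
have g0 k : gam k = 0.
  by have := keyk k; rewrite s0 mulr0 mul0r => /eqP; rewrite mulf_eq0 (negbTE N0) => /eqP.
have v0 b : v b = 0 by rewrite /v big1 // => l _; rewrite g0 mulr0.
apply/matrixP => a b; rewrite Eh !v0 s0 mxE; field; rewrite N0; exact: nn1.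
Qed.

Lemma main_inv (g : 'M[R]_n) (xi : 'rV[R]_n) :
  (3 <= n)%N -> posdefmx g -> xi != 0 -> invertible_on_sym (Q_symb g xi).
Proof.
move=> hn pd xn0.
have sg : symmx g by case: pd.
have inj : injective (Q_symb g xi).
  move=> u v e; apply/eqP; rewrite -subr_eq0; apply/eqP.
  by apply: (key g xi (u - v) hn pd xn0); rewrite linearB /= e subrr.
split.
  by move=> h sh; rewrite /symmx -Q_tr // sh.
move=> K sK.
pose F : 'End('M[R]_n) := linfun (Q_symb g xi).
have kF : lker F == 0%VS.
  by apply/lker0P => u v; rewrite !lfunE /=; apply: inj.
have FK := lker0_lfunVK kF K; rewrite lfunE /= in FK.
exists ((F^-1)%VF K); split; last split => //.
  apply: inj; by rewrite Q_tr // FK sK.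
by move=> h' _ e; apply: inj; rewrite e FK.
Qed.
End Key.

Theorem lemma2p3 (R : realType) (n : nat) (hn : (3 <= n)%N)
  (U : set 'rV[R]_n) (hU : open U) (g : 'rV[R]_n -> 'M[R]_n)
  (hg : forall x, U x -> posdefmx (g x)) :
  forall x, U x -> forall xi : 'rV[R]_n, xi != 0 ->
    invertible_on_sym (Q_symb (g x) xi).
Proof.
move=> x Ux xi xn0; exact: (@main_inv R n (g x) xi hn (hg x Ux) xn0).
Qed.
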